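(* For every $\sigma\in\mathrm{NC}_n$, the set $\mathrm{Red}_{\mathrm{NC}}(\sigma)$ of noncrossing reduced words of $\sigma$ is a commutation class in $\mathrm{Red}(\sigma)$; that is, $\mathrm{Red}_{\mathrm{NC}}(\sigma)\neq\emptyset$, and a word lies in $\mathrm{Red}_{\mathrm{NC}}(\sigma)$ if and only if it can be obtained from some (equivalently any) element of $\mathrm{Red}_{\mathrm{NC}}(\sigma)$ by a finite sequence of commutation moves $\mathbf a\,ij\,\mathbf b\leftrightarrow\mathbf a\,ji\,\mathbf b$ with $|i-j|>1$.
   Context: $\mathrm{Red}(\sigma)$ is the set of reduced words $(i_1,\dots,i_\ell)$, $\ell=\ell(\sigma)$, with $\sigma=s_{i_1}\cdots s_{i_\ell}$, where $s_i=(i,i+1)$. A set partition of $[n]$ is noncrossing if there are no distinct blocks $P,Q$ with $a,b\in P$, $c,d\in Q$, $a<c<b<d$; to it associate $\sigma\in S_n$ acting on each block $\{a_1<\dots<a_p\}$ by $\sigma(a_j)=a_{j-1}$ ($j\ge2$), $\sigma(a_1)=a_p$; $\mathrm{NC}_n$ is the set of these permutations. For $\sigma\in\mathrm{NC}_n$, $i$ is a noncrossing descent if $\sigma s_i\in\mathrm{NC}_n$ and $\ell(\sigma s_i)<\ell(\sigma)$. A noncrossing reduced word of $\sigma$ is a word $(i_1,\dots,i_\ell)$ with $\sigma=s_{i_1}\cdots s_{i_\ell}$ such that for every $1\le k\le\ell$, $s_{i_1}\cdots s_{i_k}\in\mathrm{NC}_n$ and $i_k$ is a noncrossing descent of $s_{i_1}\cdots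 s_{i_k}$. *)

(* Defs.v *)
From Stdlib Require Import Relations.
From mathcomp Require Import all_boot all_fingroup.
Set Implicit Arguments. Unset Strict Implicit. Unset Printing Implicit Defensive.

(* Conventions: [n] is represented by 'I_n = {0,...,n-1} (0-based).
   Permutations are composed as functions: pcomp p q = p o q
   (MathComp's  q * p  means "apply q, then p"... see permM). *)

Section NC.
Variable n : nat.

Definition pcomp (p q : 'S_n) : 'S_n := (q * p)%g.

Definition valid_letter (i : nat) : bool := i.+1 < n.
Definition stp (i : nat) : 'S_n :=
  if insub i : option 'I_n is Some a then
    if insub i.+1 : option 'I_n is Some b then tperm a b else 1%g
  else 1%g.

Definition wprod (w : seq nat) : 'S_n := foldr (fun i acc => pcomp (stp i) acc) (1%g : 'S_n) w.

(* Coxeter length = number of inversions *)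
Definition perm_length (s : 'S_n) : nat :=
  #|[set ij : 'I_n * 'I_n | (ij.1 < ij.2) && (s ij.2 < s ij.1)]|.

Definition Red (s : 'S_n) (w : seq nat) : Prop :=
  all valid_letter w /\ size w = perm_length s /\ wprod w = s.

Definition noncrossing (P : {set {set 'I_n}}) : bool :=
  [forall B in P, forall C in P, (B != C) ==>
     [forall a in B, forall b in B, forall c in C, forall d in C,
        ~~ [&& a < c, c < b & b < d]]].

Definition nc_partition (P : {set {set 'I_n}}) : bool :=
  partition P [set: 'I_n] && noncrossing P.

(* y is the image of x under the cyclic permutation of block B sending
   a_j to a_{j-1} (j >= 2) and a_1 to a_p, where B = {a_1 < ... < a_p} *)
Definition block_image (B : {set 'I_n}) (x y : 'I_n) : bool :=
  if [exists z in B, z < x]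
  then [&& y \in B, y < x & [forall z in B, ~~ ((y < z) && (z < x))]]
  else (y \in B) && [forall z in B, z <= y].

Definition assoc_perm (P : {set {set 'I_n}}) (s : 'S_n) : Prop :=
  forall B, B \in P -> forall x, x \in B -> block_image B x (s x).

Definition NCperm (s : 'S_n) : Prop :=
  exists P : {set {set 'I_n}}, nc_partition P /\ assoc_perm P s.

Definition nc_descent (s : 'S_n) (i : nat) : Prop :=
  NCperm (pcomp s (stp i)) /\ perm_length (pcomp s (stp i)) < perm_length s.

Definition RedNC (s : 'S_n) (w : seq nat) : Prop :=
  all valid_letter w /\ wprod w = s /\
  forall k, 1 <= k <= size w ->
    NCperm (wprod (take k w)) /\ nc_descent (wprod (take k w)) (nth 0 w k.-1).

End NC.

Definition comm_move (w w' : seq nat) : Prop :=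
  exists (a b : seq nat) (i j : nat),
    (i.+1 < j \/ j.+1 < i) /\ w = a ++ [:: i; j] ++ b /\ w' = a ++ [:: j; i] ++ b.

(* Main.v *)
Require Import Defs.
From Stdlib Require Import Relations.
From mathcomp Require Import all_boot all_fingroup.
From mathcomp Require Import zify.
Set Implicit Arguments. Unset Strict Implicit. Unset Printing Implicit Defensive.

Notation pc := Defs.pcomp.

Definition sf {n} (s : 'S_n) (x : nat) : nat :=
  if insub x is Some a then val (s a) else x.

Lemma sfE n (s : 'S_n) (x : 'I_n) : sf s x = s x.
Proof. by rewrite /sf valK. Qed.

Lemma sf_out n (s : 'S_n) x : n <= x -> sf s x = x.
Proof. by move=> H; rewrite /sf insubF // ltnNge H. Qed.

Lemma stpE n i (H : i.+1 < n) : stp n i = tperm (Ordinal (ltnW H)) (Ordinal H).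
Proof.
rewrite /stp; case: insubP => [a _ Ha|]; last by rewrite (ltnW H).
case: insubP => [b _ Hb|]; last by rewrite H.
by congr tperm; apply: val_inj.
Qed.

Lemma stp_invalid n i : ~~ (i.+1 < n) -> stp n i = 1%g.
Proof.
move=> H; rewrite /stp; case: insubP => [a _ Ha|] //.
by case: insubP => [b Hb' Hb|] //; rewrite Hb' in H.
Qed.

Lemma stp2 n i : (stp n i * stp n i = 1)%g.
Proof.
case: (boolP (i.+1 < n)) => H; last by rewrite stp_invalid // mulg1.
by rewrite stpE tperm2.
Qed.

Lemma pcK n (s : 'S_n) i : pc (pc s (stp n i)) (stp n i) = s.
Proof. by rewrite /Defs.pcomp mulgA stp2 mul1g. Qed.

Lemma sf_stp n (s : 'S_n) i x : i.+1 < n ->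
  sf (pc s (stp n i)) x = sf s (if x == i then i.+1 else if x == i.+1 then i else x).
Proof.
move=> H; case: (ltnP x n) => Hx; last first.
  have -> : (x == i) = false by apply/eqP; lia.
  have -> : (x == i.+1) = false by apply/eqP; lia.
  by rewrite !sf_out.
have -> : x = val (Ordinal Hx) by [].
move: (Ordinal Hx) => y.
rewrite sfE /Defs.pcomp permM stpE.
case: tpermP => [->|->|xa xb] /=.
- by rewrite eqxx -[i.+1]/(val (Ordinal H)) sfE.
- rewrite eqxx; case: eqP => [|_]; first lia.
  by rewrite -[i]/(val (Ordinal (ltnW H))) sfE.
- have -> : (val y == i) = false by apply/eqP => E; apply: xa; apply: val_inj; rewrite /= E.
  have -> : (val y == i.+1) = false by apply/eqP => E; apply: xb; apply: val_inj; rewrite /= E.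
  by rewrite sfE.
Qed.

Lemma wprod_cat n u v : wprod n (u ++ v) = pc (wprod n u) (wprod n v).
Proof.
elim: u => [|x u IH] /=; first by rewrite /Defs.pcomp mulg1.
by rewrite IH /Defs.pcomp mulgA.
Qed.

Lemma wprod_rcons n w i : wprod n (rcons w i) = pc (wprod n w) (stp n i).
Proof. by rewrite -cats1 wprod_cat; congr Defs.pcomp; rewrite /wprod /= /Defs.pcomp mul1g. Qed.

Lemma tpv n (a b x : 'I_n) : val (tperm a b x) = if val x == val a then val b else if val x == val b then val a else val x.
Proof.
case: tpermP => [->|->|xa xb]; rewrite ?eqxx //.
  by case: eqP => // /val_inj ->.
have -> : (val x == val a) = false by apply/eqP => /val_inj E; apply: xa; rewrite E.
have -> : (val x == val b) = false by apply/eqP => /val_inj E; apply: xb; rewrite E.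
by [].
Qed.

Lemma stp_comm n i j : i.+1 < j \/ j.+1 < i -> (stp n i * stp n j = stp n j * stp n i)%g.
Proof.
move=> Hij.
case: (boolP (i.+1 < n)) => Hi; last by rewrite (stp_invalid Hi) mul1g mulg1.
case: (boolP (j.+1 < n)) => Hj; last by rewrite (stp_invalid Hj) mul1g mulg1.
rewrite !stpE; apply/permP => x; rewrite !permM; apply: val_inj; rewrite !tpv /=.
move: (nat_of_ord x) => v; case E1: (v == i); case E2: (v == i.+1); case E3: (v == j); case E4: (v == j.+1); rewrite /= ?E1 ?E2 ?E3 ?E4; do ?[case: eqP => ?]; lia.
Qed.

Lemma length1 n : perm_length (1 : 'S_n)%g = 0.
Proof.
rewrite /perm_length; apply/eqP; rewrite cards_eq0; apply/eqP/setP => -[x y].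
by rewrite !inE /= !perm1; apply/negbTE; apply/negP => /andP [] /ltnW; rewrite leqNgt => /negbTE ->.
Qed.

Definition inv_set n (s : 'S_n) := [set ij : 'I_n * 'I_n | (ij.1 < ij.2) && (s ij.2 < s ij.1)].

Lemma length_stp n (s : 'S_n) i (H : i.+1 < n) :
  (perm_length (pc s (stp n i)) < perm_length s) = (s (Ordinal H) < s (Ordinal (ltnW H))).
Proof.
rewrite stpE /Defs.pcomp.
set a := Ordinal (ltnW H); set b := Ordinal H; set t := tperm a b.
rewrite /perm_length -/(inv_set _) -/(inv_set _).
pose f := fun p : 'I_n * 'I_n => (t p.1, t p.2).
have finj : injective f.
  by move=> [x y] [x' y'] [] /(congr1 t) + /(congr1 t); rewrite !tpermK => -> ->.
have key : inv_set (t * s) :\ (a, b) = f @^-1: (inv_set s :\ (a, b)).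
  apply/setP => -[x y]; rewrite !inE /= !permM.
  rewrite !andbA; congr (_ && _); rewrite /f /=.

  rewrite !xpair_eqE -!val_eqE !tpv /=.
  move: (nat_of_ord x) (nat_of_ord y) => u v.
  case E1: (u == i); case E2: (u == i.+1); case E3: (v == i); case E4: (v == i.+1);
    rewrite /= ?E1 ?E2 ?E3 ?E4; do ?[case: eqP => ?]; lia.
have := cardsD1 (a, b) (inv_set (t * s)).
have := cardsD1 (a, b) (inv_set s).
rewrite key card_preimset // !inE /= !permM /t tpermL tpermR /= => -> ->.
have ab : s a != s b by rewrite (inj_eq perm_inj) -val_eqE /= neq_ltn ltnSn.
case: ltngtP ab => //= h _; try lia.
Qed.

Lemma BI1 n (B : {set 'I_n}) (x y : 'I_n) : y \in B -> y < x ->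
  (forall z, z \in B -> ~~ ((y < z) && (z < x))) -> block_image B x y.
Proof.
move=> yB yx H; rewrite /block_image.
have -> : [exists z in B, z < x] by apply/existsP; exists y; rewrite yB.
by rewrite yB yx /=; apply/forallP => z; apply/implyP; apply: H.
Qed.

Lemma BI2 n (B : {set 'I_n}) (x y : 'I_n) : y \in B -> (forall z, z \in B -> x <= z) ->
  (forall z, z \in B -> z <= y) -> block_image B x y.
Proof.
move=> yB H1 H2; rewrite /block_image.
have -> : [exists z in B, z < x] = false.
  by apply/negbTE/existsP => -[z /andP [zB zx]]; have := H1 z zB; lia.
by rewrite yB /=; apply/forallP => z; apply/implyP; apply: H2.
Qed.

Lemma BIin n (B : {set 'I_n}) (x y : 'I_n) : block_image B x y -> y \in B.
Proof. by rewrite /block_image; case: ifP => _ /andP []. Qed.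

Lemma BIlt n (B : {set 'I_n}) (x y : 'I_n) z : block_image B x y -> z \in B -> z < x ->
  (y < x) /\ (forall z, z \in B -> ~~ ((y < z) && (z < x))).
Proof.
move=> H zB zx; move: H; rewrite /block_image.
have -> : [exists z in B, z < x] by apply/existsP; exists z; rewrite zB.
case/and3P => _ -> /forallP H; split => // w wB.
by have := H w; rewrite wB.
Qed.

Lemma BImin n (B : {set 'I_n}) (x y : 'I_n) : block_image B x y -> (forall z, z \in B -> x <= z) ->
  forall z, z \in B -> z <= y.
Proof.
move=> H H1; move: H; rewrite /block_image.
have -> : [exists z in B, z < x] = false.
  by apply/negbTE/existsP => -[z /andP [zB zx]]; have := H1 z zB; lia.
case/andP => _ /forallP H z zB.
by have := H z; rewrite zB.
Qed.

Definition NCblk n (s : 'S_n) (blk : 'I_n -> {set 'I_n}) : Prop :=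
 [/\ (forall x, x \in blk x), (forall x y, y \in blk x -> blk y = blk x),
     (forall x, block_image (blk x) x (s x)) &
     (forall x y p q r u, blk x != blk y -> p \in blk x -> q \in blk x ->
        r \in blk y -> u \in blk y -> ~~ [&& p < r, r < q & q < u])].

Lemma NC_blk n (s : 'S_n) : NCperm s <-> exists blk, NCblk s blk.
Proof.
split.
- case=> P [/andP [HP HN] HA].
  case/and3P: HP => /eqP Hcov Htriv H0.
  have xc : forall x, x \in cover P by move=> x; rewrite Hcov inE.
  exists (pblock P); split.
  + by move=> x; rewrite mem_pblock.
  + by move=> x y yx; apply: same_pblock.
  + by move=> x; apply: HA; [apply: pblock_mem | rewrite mem_pblock].
  + move=> x y p q r u ne pB qB rB uB.
    move/forallP: HN => /(_ (pblock P x)); rewrite pblock_mem //= => /forallP /(_ (pblock P y)).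
    rewrite pblock_mem //= ne /= => /forallP /(_ p) ; rewrite pB /= => /forallP /(_ q); rewrite qB /=.
    move=> /forallP /(_ r); rewrite rB /= => /forallP /(_ u); by rewrite uB.
- case=> blk [H1 H2 H3 H4].
  exists [set blk x | x : 'I_n]; split.
  + apply/andP; split.
    * apply/and3P; split.
      -- apply/eqP/setP => x; rewrite inE; apply/bigcupP; exists (blk x) => //.
         exact: imset_f.
      -- apply/trivIsetP => A B /imsetP [x _ ->] /imsetP [y _ ->] ne.
         apply/pred0P => z /=; apply/negP => /andP [zx zy].
         by move/eqP: ne; apply; rewrite -(H2 _ _ zx) -(H2 _ _ zy).
      -- by apply/imsetP => -[x _ E]; have := H1 x; rewrite -E inE.
    * apply/forallP => B; apply/implyP => /imsetP [x _ ->].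
      apply/forallP => C; apply/implyP => /imsetP [y _ ->].
      apply/implyP => ne.
      apply/forallP => p; apply/implyP => pB; apply/forallP => q; apply/implyP => qB.
      apply/forallP => r; apply/implyP => rB; apply/forallP => u; apply/implyP => uB; exact: (H4 x y).
  + move=> B /imsetP [y _ ->] x xB.
    by rewrite -(H2 _ _ xB); apply: H3.
Qed.

Lemma minlem n (s : 'S_n) blk (HB : NCblk s blk) c (W : {set 'I_n}) y0 :
  y0 \in W -> (forall y, y \in W -> y \in blk c) -> (forall y, y \in W -> s y \in W) ->
  exists m, m \in W /\ forall z, z \in blk c -> m <= z.
Proof.
case: HB => H1 H2 H3 H4 y0W Wc Wcl.
case: (arg_minnP (fun m : 'I_n => val m) y0W) => m mW mmin.
exists m; split => // z zB; rewrite leqNgt; apply/negP => zm.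
have Hm := H3 m; rewrite (H2 _ _ (Wc _ mW)) in Hm.
have [sm _] := BIlt Hm zB zm.
have /= := mmin _ (Wcl _ mW); lia.
Qed.

Lemma closed_blk n (s : 'S_n) blk (HB : NCblk s blk) c (Y : {set 'I_n}) y0 :
  y0 \in Y -> (forall y, y \in Y -> y \in blk c) -> (forall y, y \in Y -> s y \in Y) ->
  forall x, x \in blk c -> x \in Y.
Proof.
move=> y0Y Yc Ycl x xB; apply/negPn/negP => xY.
have imY : s @: Y = Y.
  apply/eqP; rewrite eqEcard card_imset ?leqnn ?andbT; last exact: perm_inj.
  by apply/subsetP => z /imsetP [y yY ->]; apply: Ycl.
case: (HB) => H1 H2 H3 H4.
pose W := [set z in blk c | z \notin Y].
have [m1 [m1Y m1min]] := minlem HB y0Y Yc Ycl.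
have [|||m2 [m2W m2min]] := @minlem n s blk HB c W x.
- by rewrite inE xB xY.
- by move=> y; rewrite inE => /andP [].
- move=> y; rewrite inE => /andP [yB yY]; rewrite inE; apply/andP; split.
    by have := BIin (H3 y); rewrite (H2 _ _ yB).
  by apply: contra yY; rewrite -{1}imY mem_imset //; exact: perm_inj.
- move: m2W; rewrite inE => /andP [m2B m2Y].
  have := m1min _ m2B; have := m2min _ (Yc _ m1Y) => le1 le2.
  have E : m1 = m2 by apply: val_inj; apply/eqP; rewrite eqn_leq le1 le2.
  by move: m2Y; rewrite -E m1Y.
Qed.

Lemma stpE' n i (a b : 'I_n) : nat_of_ord a = i -> nat_of_ord b = i.+1 -> stp n i = tperm a b.
Proof.
move=> va vb; have H : i.+1 < n by rewrite -vb ltn_ord.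
by rewrite (stpE H); congr tperm; apply: val_inj.
Qed.

Lemma lenE n (s : 'S_n) i (a b : 'I_n) : nat_of_ord a = i -> nat_of_ord b = i.+1 ->
  (perm_length (pc s (stp n i)) < perm_length s) = (s b < s a).
Proof.
move=> va vb; have H : i.+1 < n by rewrite -vb ltn_ord.
rewrite (length_stp s H).
have -> : Ordinal H = b by apply: val_inj.
by have -> : Ordinal (ltnW H) = a by apply: val_inj.
Qed.

Lemma tauE n (s : 'S_n) i (a b : 'I_n) x : nat_of_ord a = i -> nat_of_ord b = i.+1 ->
  pc s (stp n i) x = s (tperm a b x).
Proof. by move=> va vb; rewrite (stpE' va vb) /Defs.pcomp permM. Qed.

Lemma key1 n (s : 'S_n) i (a b : 'I_n) blk blk' : nat_of_ord a = i -> nat_of_ord b = i.+1 ->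
  NCblk s blk -> NCblk (pc s (stp n i)) blk' -> s b < s a ->
  ((nat_of_ord (s b) == i) && (i < s a)) || ((nat_of_ord (s a) == i) && (s b < i)).
Proof.
move=> va vb HB HB' Hlt.
have HBc := HB; have HB'c := HB'.
case: HB => H1 H2 H3 H4; case: HB' => H1' H2' H3' H4'.
have ab : a != b by apply/eqP => E; rewrite E in va; lia.
case: (boolP (b \in blk a)) => bB.
  have Hb := H3 b; rewrite (H2 _ _ bB) in Hb.
  have [sbb /(_ a (H1 a))] := BIlt Hb (H1 a) (ltac:(rewrite va vb; done) : a < b).
  move=> nb; apply/orP; left; apply/andP; split; last by lia.
  by apply/eqP; lia.
case: (boolP (a \in blk' b)) => aX.
  have Hb := H3' b; rewrite (tauE _ _ va vb) tpermR in Hb.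
  have [sab /(_ a aX)] := BIlt Hb aX (ltac:(rewrite va vb; done) : a < b).
  move=> na; apply/orP; right; apply/andP; split; last by lia.
  by apply/eqP; lia.
exfalso; move/negP: (aX); apply.
pose Y := blk' b :&: blk a.
have : a \in Y.
  apply: (closed_blk HBc (y0 := s a)) (H1 a).
  - rewrite inE; apply/andP; split; last exact: (BIin (H3 a)).
    by have := BIin (H3' b); rewrite (tauE _ _ va vb) tpermR.
  - by move=> y; rewrite inE => /andP [].
  - move=> y; rewrite inE => /andP [yX yA].
    have ya : a != y by apply: contraNneq aX => ->.
    have yb : b != y by apply: contraNneq bB => ->.
    rewrite inE; apply/andP; split.
      have := BIin (H3' y); rewrite (H2' _ _ yX) (tauE _ _ va vb) (tpermD ya yb) //.
    by have := BIin (H3 y); rewrite (H2 _ _ yA).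
by rewrite inE => /andP [].
Qed.

Lemma key2a n (s : 'S_n) i (a b : 'I_n) blk : nat_of_ord a = i -> nat_of_ord b = i.+1 ->
  NCblk s blk -> s b = a -> a < s a -> exists blk', NCblk (pc s (stp n i)) blk'.
Proof.
move=> va vb HB sba asa.
have ab : a != b by apply/eqP => E; rewrite E in va; lia.
case: HB => H1 H2 H3 H4.
pose B := blk a.
have aB : a \in B by exact: H1.
have bB : b \in B.
  by have := BIin (H3 b); rewrite sba => aBb; rewrite /B (H2 _ _ aBb).
have amin : forall z, z \in B -> a <= z.
  move=> z zB; rewrite leqNgt; apply/negP => za.
  by have [] := BIlt (H3 a) zB za; lia.
have xBblk : forall x, x \in B -> blk x = B by move=> x xB; apply: H2.
pose blk' x := if x == a then [set a] else if x \in B then B :\ a else blk x.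
have sub : forall z w, w \in blk' z -> w \in blk z.
  move=> z w; rewrite /blk'; case: (z =P a) => [->|za]; first by rewrite inE => /eqP ->.
  by case: ifP => zB //; rewrite inE (xBblk _ zB) => /andP [].
have tv : forall x, pc s (stp n i) x = s (tperm a b x) by move=> x; apply: tauE.
have blka : blk' a = [set a] by rewrite /blk' eqxx.
have blkB : forall x, x \in B -> x != a -> blk' x = B :\ a.
  by move=> x xB xa; rewrite /blk' (negbTE xa) xB.
have blkO : forall x, x \notin B -> blk' x = blk x.
  move=> x xB; have xa : x != a by apply: contra xB => /eqP ->.
  by rewrite /blk' (negbTE xa) (negbTE xB).
exists blk'; split.
- move=> x; case: (x =P a) => [->|/eqP xa]; first by rewrite blka inE.
  case: (boolP (x \in B)) => xB; first by rewrite blkB // !inE xa xB.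
  by rewrite blkO.
- move=> x y; case: (x =P a) => [->|/eqP xa].
    by rewrite blka inE => /eqP ->.
  case: (boolP (x \in B)) => xB.
    rewrite (blkB _ xB xa) inE => /andP [ya yB].
    by apply: blkB => //; move: ya; rewrite inE.
  rewrite (blkO _ xB) => yx.
  have yB : y \notin B.
    apply/negP => yB; have E : blk x = B by rewrite -(H2 _ _ yx) (xBblk _ yB).
    by move: xB; rewrite -E H1.
  by rewrite !blkO // (H2 _ _ yx).
- move=> x; rewrite tv; case: (x =P a) => [->|/eqP xa].
    rewrite blka tpermL sba; apply: BI2; first by rewrite inE.
      by move=> z; rewrite inE => /eqP ->.
    by move=> z; rewrite inE => /eqP ->.
  case: (x =P b) => [->|/eqP xb].
    rewrite (blkB _ bB) ?tpermR; last by rewrite eq_sym.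
    apply: BI2.
    + by rewrite !inE (BIin (H3 a)) andbT; apply/eqP => E; rewrite E in asa; lia.
    + move=> z; rewrite !inE => /andP [za zB]; have := amin z zB; move/eqP: za => za.
      have : nat_of_ord z != nat_of_ord a by apply/eqP => E; apply: za; apply: val_inj.
      lia.
    + by move=> z; rewrite inE => /andP [_ zB]; apply: (BImin (H3 a) amin).
  have xa' : a != x by rewrite eq_sym.
  have xb' : b != x by rewrite eq_sym.
  rewrite (tpermD xa' xb').
  case: (boolP (x \in B)) => xB; last by rewrite blkO //; exact: H3.
  rewrite (blkB _ xB xa).
  have xgt : b < x.
    have := amin x xB.
    have : nat_of_ord x != nat_of_ord a by apply/eqP => E; move/eqP: xa; apply; apply: val_inj.
    have : nat_of_ord x != nat_of_ord b by apply/eqP => E; move/eqP: xb; apply; apply: val_inj.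
    lia.
  have Hx := H3 x; rewrite (xBblk _ xB) in Hx.
  have [sxx nz] := BIlt Hx aB (ltac:(lia) : a < x).
  apply: BI1 => //.
  + rewrite !inE (BIin Hx) andbT; apply/eqP => E.
    by have := nz b bB; rewrite E; lia.
  + by move=> z; rewrite !inE => /andP [_ zB]; apply: nz.
- move=> x y p q r u ne pB qB rB uB; apply/negP => /and3P [pr rq qu].
  have ne' : blk x != blk y.
    apply/eqP => E; move/eqP: ne; apply.
    have inB : forall z, blk z = B -> z \in B by move=> z <-; apply: H1.
    have sing : forall z, z \in B -> blk' z = [set a] \/ blk' z = B :\ a.
      by move=> z zB; rewrite /blk'; case: eqP => _; [left | right; rewrite zB].
    case: (boolP (x \in B)) => xB.
      have yB : y \in B by apply: inB; rewrite -E xBblk.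
      case: (sing x xB) => ex; case: (sing y yB) => ey; rewrite ?ex ?ey //.
      * by move: pB qB; rewrite ex !inE => /eqP pa /eqP qa; move: pr rq; rewrite pa qa; lia.
      * by move: rB uB; rewrite ey !inE => /eqP ra /eqP ua; move: rq qu; rewrite ra ua; lia.
    have yB : y \notin B.
      by apply: contra xB => yB; apply: inB; rewrite E xBblk.
    have xa : x != a by apply: contra xB => /eqP ->.
    have ya : y != a by apply: contra yB => /eqP ->.
    by rewrite /blk' (negbTE xa) (negbTE ya) (negbTE xB) (negbTE yB).
  by move: (H4 x y p q r u ne' (sub _ _ pB) (sub _ _ qB) (sub _ _ rB) (sub _ _ uB)); rewrite pr rq qu.
Qed.

Lemma key2b n (s : 'S_n) i (a b : 'I_n) blk : nat_of_ord a = i -> nat_of_ord b = i.+1 ->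
  NCblk s blk -> s a = a -> s b < a -> exists blk', NCblk (pc s (stp n i)) blk'.
Proof.
move=> va vb HB saa sba.
have ab : a != b by apply/eqP => E; rewrite E in va; lia.
have ovE : forall u v : 'I_n, nat_of_ord u = nat_of_ord v -> u = v by move=> u v E; apply: val_inj.
case: HB => H1 H2 H3 H4.
have asing : forall z, z \in blk a -> z = a.
  move=> z za; apply: ovE; apply/eqP; rewrite eqn_leq.
  have amin : forall z, z \in blk a -> a <= z.
    move=> w wa; rewrite leqNgt; apply/negP => wlt.
    by have [] := BIlt (H3 a) wa wlt; rewrite saa ltnn.
  by have := BImin (H3 a) amin za; rewrite saa => -> /=; apply: amin.
pose C := blk b.
have bC : b \in C by exact: H1.
have aC : a \notin C.
  apply/negP => aC; have E : blk a = C by apply: H2.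
  by move/eqP: ab; apply; rewrite (asing b) // E.
have sbC : s b \in C by exact: (BIin (H3 b)).
have [sbb nzb] := BIlt (H3 b) sbC (ltac:(lia) : s b < b).
have xCblk : forall x, x \in C -> blk x = C by move=> x xC; apply: H2.
pose blk' x := if (x == a) || (x \in C) then a |: C else blk x.
have blkM : forall x, (x == a) || (x \in C) -> blk' x = a |: C by move=> x h; rewrite /blk' h.
have blkO : forall x, x != a -> x \notin C -> blk' x = blk x.
  by move=> x xa xC; rewrite /blk' (negbTE xa) (negbTE xC).
have far : forall y r, y != a -> y \notin C -> r \in blk y ->
    (nat_of_ord r != i) && (nat_of_ord r != i.+1).
  move=> y r ya yC ry; apply/andP; split; apply/eqP => E.
    have ra : r = a by apply: ovE; rewrite E.
    move: ry; rewrite ra => ry; move/eqP: ya; apply; apply: asing.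
    by rewrite (H2 _ _ ry); exact: H1.
  have rb : r = b by apply: ovE; rewrite E.
  move: ry; rewrite rb => ry; move/negP: yC; apply.
  by rewrite /C (H2 _ _ ry); exact: H1.
have rep : forall p, p \in a |: C -> exists p', p' \in C /\
    (nat_of_ord p' = p \/ (nat_of_ord p = i /\ nat_of_ord p' = i.+1)).
  move=> p; rewrite !inE; case: (p =P a) => [->|_] /= pC.
    by exists b; split; [exact: bC | right; split].

  by exists p; split; [exact: pC | left].
have tv : forall x, pc s (stp n i) x = s (tperm a b x) by move=> x; apply: tauE.
exists blk'; split.
- move=> x; case: (boolP ((x == a) || (x \in C))) => h; first by rewrite blkM // !inE.
  by move: h; rewrite negb_or => /andP [xa xC]; rewrite blkO.
- move=> x y; case: (boolP ((x == a) || (x \in C))) => h.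
    rewrite (blkM _ h) !inE => hy; exact: blkM.
  move: h; rewrite negb_or => /andP [xa xC]; rewrite (blkO _ xa xC) => yx.
  have ya : y != a.
    apply/negP => /eqP ya; move/eqP: xa; apply; apply: asing.
    by rewrite -ya (H2 _ _ yx) H1.
  have yC : y \notin C.
    by apply/negP => yC; move/negP: xC; apply; rewrite -(xCblk _ yC) (H2 _ _ yx) H1.
  by rewrite blkO // (H2 _ _ yx).
- move=> x; rewrite tv; case: (x =P a) => [->|/eqP xa].
    rewrite blkM ?eqxx // tpermL; apply: BI1 => //; first by rewrite !inE sbC orbT.
    move=> z; rewrite !inE; case: (z =P a) => [->|_] /=; first by lia.
    move=> zC; have := nzb z zC; lia.
  case: (x =P b) => [->|/eqP xb].
    rewrite blkM ?bC ?orbT // tpermR saa; apply: BI1; first by rewrite !inE eqxx.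
      by lia.
    by move=> z _; lia.
  have xa' : a != x by rewrite eq_sym.
  have xb' : b != x by rewrite eq_sym.
  rewrite (tpermD xa' xb').
  case: (boolP (x \in C)) => xC; last by rewrite blkO //; exact: H3.
  rewrite blkM ?xC ?orbT //.
  have Hx := H3 x; rewrite (xCblk _ xC) in Hx.
  case: (pickP [pred z | (z \in C) && (z < x)]) => [z /andP [zC zx] | none].
    have [sxx nz] := BIlt Hx zC zx.
    apply: BI1 => //; first by rewrite !inE (BIin Hx) orbT.
    move=> w; rewrite !inE; case: (w =P a) => [->|_] /=; last exact: nz.
    move=> _; apply/negP => /andP [h1 h2].
    have xb2 : nat_of_ord x != nat_of_ord b by apply/eqP => E; move/eqP: xb; apply; apply: ovE.
    have := nz b bC; rewrite negb_and -!leqNgt => /orP [] h3; clear -h1 h2 h3 va vb xb2; lia.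
  have xmin : forall z, z \in C -> x <= z.
    by move=> z zC; have := none z; rewrite /= zC /= => /negbT; rewrite -leqNgt.
  apply: BI2; first by rewrite !inE (BIin Hx) orbT.
    move=> z; rewrite !inE; case: (z =P a) => [->|_] /=; last exact: xmin.
    by have h := xmin _ sbC; clear -h sba; lia.
  move=> z; rewrite !inE; case: (z =P a) => [->|_] /=; last exact: (BImin Hx xmin).
  by have h := BImin Hx xmin bC; clear -h va vb; lia.
- move=> x y p q r u ne pB qB rB uB; apply/negP => /and3P [pr rq qu].
  case: (boolP ((x == a) || (x \in C))) => hx; case: (boolP ((y == a) || (y \in C))) => hy.
  + by move/eqP: ne; apply; rewrite !blkM.
  + move: hy; rewrite negb_or => /andP [ya yC].
    move: pB qB rB uB; rewrite (blkM _ hx) (blkO _ ya yC) => pB qB rB uB.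
    have [p' [p'C hp]] := rep _ pB; have [q' [q'C hq]] := rep _ qB.
    have /andP [/eqP r1 /eqP r2] := far _ _ ya yC rB.
    have /andP [/eqP u1 /eqP u2] := far _ _ ya yC uB.
    have ne' : blk b != blk y.
      by apply/eqP => E; move/negP: yC; apply; rewrite /C E H1.
    have h := H4 b y p' q' r u ne' p'C q'C rB uB.
    rewrite !negb_and -!leqNgt in h; clear -h pr rq qu hp hq r1 r2 u1 u2; lia.
  + move: hx; rewrite negb_or => /andP [xa xC].
    move: pB qB rB uB; rewrite (blkM _ hy) (blkO _ xa xC) => pB qB rB uB.
    have [r' [r'C hr]] := rep _ rB; have [u' [u'C hu]] := rep _ uB.
    have /andP [/eqP p1 /eqP p2] := far _ _ xa xC pB.
    have /andP [/eqP q1 /eqP q2] := far _ _ xa xC qB.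
    have ne' : blk x != blk b.
      by apply/eqP => E; move/negP: xC; apply; rewrite /C -E H1.
    have h := H4 x b p q r' u' ne' pB qB r'C u'C.
    rewrite !negb_and -!leqNgt in h; clear -h pr rq qu hr hu p1 p2 q1 q2; lia.
  + move: hx hy; rewrite !negb_or => /andP [xa xC] /andP [ya yC].
    move: ne pB qB rB uB; rewrite !blkO // => ne pB qB rB uB.
    by have := H4 x y p q r u ne pB qB rB uB; rewrite pr rq qu.
Qed.

Definition Pd n (s : 'S_n) i :=
  ((sf s i.+1 == i) && (i < sf s i)) || ((sf s i == i) && (sf s i.+1 < i)).

Lemma key n (s : 'S_n) i : i.+1 < n -> NCperm s -> (nc_descent s i <-> Pd s i).
Proof.
move=> H Hnc.
have [a va] : {a : 'I_n | nat_of_ord a = i} := exist _ (Ordinal (ltnW H)) erefl.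
have [b vb] : {b : 'I_n | nat_of_ord b = i.+1} := exist _ (Ordinal H) erefl.
have Ea : sf s i = s a by rewrite -va sfE.
have Eb : sf s i.+1 = s b by rewrite -vb sfE.
rewrite /Pd Ea Eb.
case/NC_blk: Hnc => blk HB.
split.
- case=> Hnc' Hlt; rewrite (lenE s va vb) in Hlt.
  case/NC_blk: Hnc' => blk' HB'; exact: key1 va vb HB HB' Hlt.
- move=> /orP [/andP [/eqP sb ia] | /andP [/eqP sa sbi]].
  + have sba : s b = a by apply: val_inj => /=; rewrite sb va.
    split; last by rewrite (lenE s va vb); clear -sb ia; lia.
    apply/NC_blk; refine (key2a va vb HB sba _); clear -va ia; lia.
  + have saa : s a = a by apply: val_inj => /=; rewrite sa va.
    split; last by rewrite (lenE s va vb); clear -sa sbi; lia.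
    apply/NC_blk; refine (key2b va vb HB saa _); clear -va sbi; lia.
Qed.

Lemma ncdesc_valid n (s : 'S_n) i : nc_descent s i -> i.+1 < n.
Proof.
case=> _; case: (boolP (i.+1 < n)) => // Hi.
by rewrite (stp_invalid Hi) /Defs.pcomp mul1g ltnn.
Qed.

Lemma transfer n (s t : 'S_n) j : NCperm s -> NCperm t ->
  sf s j = sf t j -> sf s j.+1 = sf t j.+1 -> nc_descent s j -> nc_descent t j.
Proof.
move=> Hs Ht E1 E2 D; have Hj := ncdesc_valid D.
apply/(key Hj Ht); move/(key Hj Hs): D.
by rewrite /Pd E1 E2.
Qed.

Lemma exists_desc n (s : 'S_n) : NCperm s -> s <> 1%g -> exists i, nc_descent s i.
Proof.
move=> Hnc s1.
have HB0 := Hnc; case/NC_blk: HB0 => blk HB; have HBc := HB; case: HB => H1 H2 H3 H4.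
have ovE : forall u v : 'I_n, nat_of_ord u = nat_of_ord v -> u = v by move=> u v E; apply: val_inj.
case: (pickP (fun x => s x != x)) => [x0 x0f|none]; last first.
  by exfalso; apply: s1; apply/permP => x; rewrite perm1; apply/eqP; apply/negbFE; apply: none.
case: (@arg_minnP _ x0 (fun x => s x != x) (fun m : 'I_n => val m) x0f) => a0 a0f a0min.
have a0lt : a0 < s a0.
  have h : s (s a0) != s a0 by rewrite (inj_eq perm_inj).
  have := a0min _ h => /= h1.
  have h2 : nat_of_ord (s a0) != nat_of_ord a0 by apply/eqP => E; move/eqP: a0f; apply; apply: ovE.
  clear -h1 h2; lia.
pose b0 := (s^-1)%g a0.
have sb0 : s b0 = a0 by rewrite /b0 permKV.
have Qb0 : (s b0 < b0) && (s b0 < s (s b0)).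
  rewrite sb0 a0lt andbT.
  have h : s b0 != b0 by rewrite sb0; apply/eqP => E; move/eqP: a0f; apply; rewrite {1}E sb0.
  have := a0min _ h => /= h1.
  have h2 : nat_of_ord b0 != nat_of_ord a0.
    by apply/eqP => E; move/eqP: h; apply; rewrite sb0; apply: ovE.
  clear -h1 h2; lia.
case: (@arg_minnP _ b0 (fun b => (s b < b) && (s b < s (s b))) (fun b : 'I_n => b - s b) Qb0) => b /andP [ab asa] bmin.
pose a := s b.
case: (ltngtP (nat_of_ord b) (nat_of_ord a).+1) => [hlt|hgt|heq].
- by exfalso; rewrite -/a in ab; clear -hlt ab; lia.
-
  have ep : (nat_of_ord b).-1 < n by apply: leq_ltn_trans (leq_pred _) (ltn_ord b).
  have [e ve] : {e : 'I_n | nat_of_ord e = (nat_of_ord b).-1} := exist _ (Ordinal ep) erefl.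
  have se : s e = e.
    apply/eqP/negPn/negP => see.
    pose B := blk b.
    have aB : a \in B by exact: (BIin (H3 b)).
    have [_ nzB] := BIlt (H3 b) aB ab.
    have eB : e \notin B.
      apply/negP => eB; have := nzB e eB; rewrite -/a; clear -ve hgt; lia.
    pose D := blk e.
    have eD : e \in D by exact: H1.
    have DB : blk e != blk b.
      by apply/eqP => E; move/negP: eB; apply; rewrite /B -E H1.
    have Dsub : forall z, z \in D -> (a < z) && (z < b).
      move=> z zD.
      have za : nat_of_ord z != nat_of_ord a.
        apply/eqP => E; move/negP: eB; apply.
        have E' := ovE _ _ E.
        by rewrite /B -(H2 _ _ aB) -E' (H2 _ _ zD); exact: H1.
      have zb : nat_of_ord z != nat_of_ord b.
        apply/eqP => E; move/negP: eB; apply.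
        have E' := ovE _ _ E.
        by rewrite /B -E' (H2 _ _ zD); exact: H1.
      have c1 := H4 e b z e a b DB zD eD aB (H1 b).
      have c2 := H4 b e a b e z (ltac:(by rewrite eq_sym)) aB (H1 b) eD zD.
      rewrite -/a in ab; clear -c1 c2 za zb ab hgt ve; lia.
    case: (arg_minnP (fun m : 'I_n => val m) eD) => a' a'D a'min.
    have Da' : blk a' = D by apply: H2.
    have amin' : forall z, z \in blk a' -> a' <= z by rewrite Da'; exact: a'min.
    have sup := BImin (H3 a') amin'.
    have sa'D : s a' \in D by rewrite -Da'; exact: (BIin (H3 a')).
    have a'lt : a' < s a'.
      have h1 := sup e (ltac:(by rewrite Da')).
      have seD : s e \in D by exact: (BIin (H3 e)).
      have h2 := sup _ (ltac:(by rewrite Da')  : s e \in blk a').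
      have h3 := a'min _ seD.
      have h4 := a'min _ eD.
      have h5 : nat_of_ord (s e) != nat_of_ord e by apply/eqP => E; move/negP: see; apply; apply/eqP; apply: ovE.
      have h6 := sup a' (H1 a').
      simpl in *; clear -h1 h2 h3 h4 h5 h6; lia.
    pose b' := (s^-1)%g a'.
    have sb' : s b' = a' by rewrite /b' permKV.
    have b'D : b' \in D.
      have h := BIin (H3 b'); rewrite sb' in h.
      by rewrite -Da' (H2 _ _ h) H1.
    have Qb' : (s b' < b') && (s b' < s (s b')).
      rewrite sb' a'lt andbT.
      have h1 := a'min _ b'D.
      have h2 : nat_of_ord b' != nat_of_ord a'.
        apply/eqP => E; have E' : b' = a' by apply: ovE.
        by move: a'lt; rewrite -{1}sb' E' ltnn.
      simpl in *; clear -h1 h2; lia.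
    have := bmin _ Qb'; rewrite /= sb'.
    have := Dsub _ a'D; have := Dsub _ b'D.
    rewrite -/a; clear -hgt; lia.
  exists (nat_of_ord e).
  have Hi : (nat_of_ord e).+1 < n by rewrite ve; clear -hgt; have := ltn_ord b; lia.
  apply/(key Hi Hnc); rewrite /Pd.
  have -> : (nat_of_ord e).+1 = nat_of_ord b by rewrite ve; clear -hgt; lia.
  rewrite !sfE se eqxx /= -/a; apply/orP; right; clear -hgt ve; lia.
- exists (nat_of_ord a).
  have Hi : (nat_of_ord a).+1 < n by rewrite -heq.
  apply/(key Hi Hnc); rewrite /Pd -heq !sfE eqxx /=; by rewrite heq asa.
Qed.

Lemma RedNC_nil n (s : 'S_n) : RedNC s [::] -> s = 1%g.
Proof. by case=> _ [<-]. Qed.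

Lemma RedNC_nil' n : RedNC (1%g : 'S_n) [::].
Proof. by split => //; split => // k /andP [h1 h2]; exfalso; rewrite /= in h2; lia. Qed.

Lemma RedNC_rcons n (s : 'S_n) w i :
  RedNC s (rcons w i) <-> [/\ RedNC (pc s (stp n i)) w, NCperm s & nc_descent s i].
Proof.
split.
- case=> Hv [Hw Hk].
  move: Hv; rewrite all_rcons => /andP [vi vw].
  have Hl : NCperm s /\ nc_descent s i.
    have := Hk (size w).+1; rewrite size_rcons leqnn /= take_oversize ?size_rcons //.
    by rewrite Hw nth_rcons ltnn eqxx => /(_ isT).
  case: Hl => Hl1 Hl2; split => //; split => //; split.
    by rewrite -Hw wprod_rcons pcK.
  move=> k /andP [k1 kw].
  have := Hk k; rewrite size_rcons k1 (leq_trans kw (leqnSn _)) -cats1 takel_cat //.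
  by rewrite cats1 nth_rcons (ltac:(clear -k1 kw; lia) : k.-1 < size w) => /(_ isT).
- case=> [[Hv [Hw Hk]] Hs Hd]; split.
    by rewrite all_rcons Hv andbT; apply: ncdesc_valid Hd.
  split; first by rewrite wprod_rcons Hw pcK.
  move=> k; rewrite size_rcons => /andP [k1 kw].
  case: (ltngtP k (size w).+1) => [klt|kgt|->]; last 2 first.
  + by exfalso; clear -kw kgt; lia.
  + by rewrite take_oversize ?size_rcons // wprod_rcons Hw pcK nth_rcons ltnn eqxx.
  rewrite -cats1 takel_cat // cats1 nth_rcons.
  have -> : k.-1 < size w by clear -k1 klt; lia.
  by apply: Hk; rewrite k1 /=.
Qed.

Lemma pc_comm n (s : 'S_n) i j : i.+1 < j \/ j.+1 < i ->
  pc (pc s (stp n i)) (stp n j) = pc (pc s (stp n j)) (stp n i).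
Proof. by move=> H; rewrite /Defs.pcomp !mulgA (stp_comm _ H). Qed.

Lemma comm_rcons u v x : comm_move u v -> comm_move (rcons u x) (rcons v x).
Proof.
case=> a [b [i [j [H [-> ->]]]]].
by exists a, (rcons b x), i, j; split => //; rewrite -!rcons_cat.
Qed.

Lemma crt_rcons u v x : clos_refl_trans (seq nat) comm_move u v ->
  clos_refl_trans (seq nat) comm_move (rcons u x) (rcons v x).
Proof.
elim=> [y z H|y|y z w _ IH1 _ IH2].
- by apply: rt_step; apply: comm_rcons.
- exact: rt_refl.
- exact: rt_trans IH1 IH2.
Qed.

Lemma comm_sym u v : comm_move u v -> comm_move v u.
Proof.
case=> a [b [i [j [H [-> ->]]]]].
by exists a, b, j, i; split => //; lia.
Qed.

Lemma crt_sym u v : clos_refl_trans (seq nat) comm_move u v ->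
  clos_refl_trans (seq nat) comm_move v u.
Proof.
elim=> [y z H|y|y z w _ IH1 _ IH2].
- by apply: rt_step; apply: comm_sym.
- exact: rt_refl.
- exact: rt_trans IH2 IH1.
Qed.

Lemma sf_far n (s : 'S_n) i j : i.+1 < n -> j.+1 < i \/ i.+1 < j ->
  sf (pc s (stp n i)) j = sf s j /\ sf (pc s (stp n i)) j.+1 = sf s j.+1.
Proof.
move=> Hi H; rewrite !sf_stp //.
have -> : (j == i) = false by apply/eqP; lia.
have -> : (j == i.+1) = false by apply/eqP; lia.
have -> : (j.+1 == i) = false by apply/eqP; lia.
by have -> : (j.+1 == i.+1) = false by apply/eqP; lia.
Qed.

Lemma desc_far n (s : 'S_n) i j : NCperm s -> nc_descent s i -> nc_descent s j -> i != j ->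
  i.+1 < j \/ j.+1 < i.
Proof.
move=> Hs Di Dj ne.
have Hi := ncdesc_valid Di; have Hj := ncdesc_valid Dj.
move/(key Hi Hs): Di; move/(key Hj Hs): Dj; rewrite /Pd.
case: (ltngtP i.+1 j) => [|h|h]; first by left.
- case: (ltngtP j.+1 i) => [|h'|h']; first by right.
  + by exfalso; clear -h h' ne; move/eqP: ne; lia.
  + rewrite -h'; move: (sf s j) (sf s j.+1) (sf s j.+2) => x y z.
    by move=> A B; exfalso; clear -A B; lia.
- rewrite -h; move: (sf s i) (sf s i.+1) (sf s i.+2) => x y z.
  by move=> A B; exfalso; clear -A B; lia.
Qed.

Lemma exist_red n k (s : 'S_n) : perm_length s < k -> NCperm s -> exists w, RedNC s w.
Proof.
elim: k s => [|k IH] s //.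
move=> Hk Hs; case: (eqVneq s 1%g) => [->|s1].
  by exists [::]; exact: RedNC_nil'.
have [i Di] := exists_desc Hs (elimN eqP s1).
have Di' := Di; case: Di' => Hs' Hl.
have [w Hw] := IH (pc s (stp n i)) (ltac:(clear -Hk Hl; lia)) Hs'.
by exists (rcons w i); apply/RedNC_rcons.
Qed.

Lemma comm_pres n (s : 'S_n) w w' : comm_move w w' -> RedNC s w -> RedNC s w'.
Proof.
case=> a [b [i [j [Hij [-> ->]]]]].
elim/last_ind: b s => [|b x IH] s.
  have E : forall x y, a ++ [:: x; y] ++ [::] = rcons (rcons a x) y.
    by move=> x y; rewrite -!cats1 -catA.
  rewrite !E.
  case/RedNC_rcons => /RedNC_rcons [R Hsj Dji] Hs Dj.
  have Hj := ncdesc_valid Dj.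
  have [E1 E2] := sf_far s Hj (ltac:(clear -Hij; lia) : i.+1 < j \/ j.+1 < i).
  have Di : nc_descent s i by apply: transfer Hsj Hs E1 E2 Dji.
  have Hi := ncdesc_valid Di.
  have Hsi := Di; case: Hsi => Hsi _.
  have [F1 F2] := sf_far s Hi (ltac:(clear -Hij; lia) : j.+1 < i \/ i.+1 < j).
  have Dij : nc_descent (pc s (stp n i)) j by apply: transfer Hs Hsi (esym F1) (esym F2) Dj.
  apply/RedNC_rcons; split => //; apply/RedNC_rcons; split => //.
  by rewrite pc_comm.
rewrite -!rcons_cat => /RedNC_rcons [R Hs Dx].
by apply/RedNC_rcons; split => //; apply: IH.
Qed.

Lemma crt_pres n (s : 'S_n) u v : clos_refl_trans (seq nat) comm_move u v -> RedNC s u -> RedNC s v.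
Proof.
elim=> [y z H|y|y z w _ IH1 _ IH2] //.
- exact: comm_pres.
- by move=> /IH1 /IH2.
Qed.

Lemma connect_red n k (s : 'S_n) : perm_length s < k -> NCperm s ->
  forall w0 w, RedNC s w0 -> RedNC s w -> clos_refl_trans (seq nat) comm_move w0 w.
Proof.
elim: k s => [|k IH] s //.
move=> Hk Hs w0 w; case/lastP: w0 => [|u0 i]; case/lastP: w => [|u j].
- by move=> _ _; apply: rt_refl.
- move=> /RedNC_nil -> /RedNC_rcons [_ _ [_]]; by rewrite length1.
- move=> /RedNC_rcons [_ _ [_]] + /RedNC_nil E; by rewrite E length1.
move=> /RedNC_rcons [R0 _ Di] /RedNC_rcons [R _ Dj].
have Di' := Di; case: Di' => Hsi Hli.
have Dj' := Dj; case: Dj' => Hsj Hlj.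
case: (eqVneq i j) => [E|ne].
  subst j; apply: crt_rcons; apply: (IH (pc s (stp n i)) (ltac:(clear -Hk Hli; lia)) Hsi _ _ R0 R).
have Hij := desc_far Hs Di Dj ne.
have Hi := ncdesc_valid Di; have Hj := ncdesc_valid Dj.
have [E1 E2] := sf_far s Hi (ltac:(clear -Hij; lia) : j.+1 < i \/ i.+1 < j).
have Dij : nc_descent (pc s (stp n i)) j by apply: transfer Hs Hsi (esym E1) (esym E2) Dj.
have [F1 F2] := sf_far s Hj (ltac:(clear -Hij; lia) : i.+1 < j \/ j.+1 < i).
have Dji : nc_descent (pc s (stp n j)) i by apply: transfer Hs Hsj (esym F1) (esym F2) Di.
have Dij' := Dij; case: Dij' => Hsij Hlij.
have [v Rv] := exist_red (ltnSn _) Hsij.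
have Rvj : RedNC (pc s (stp n i)) (rcons v j) by apply/RedNC_rcons.
have Rvi : RedNC (pc s (stp n j)) (rcons v i).
  by apply/RedNC_rcons; split => //; rewrite -pc_comm.
have C1 := IH (pc s (stp n i)) (ltac:(clear -Hk Hli; lia)) Hsi _ _ R0 Rvj.
have C2 := IH (pc s (stp n j)) (ltac:(clear -Hk Hlj; lia)) Hsj _ _ R Rvi.
apply: rt_trans (crt_rcons i C1) _.
apply: rt_trans (crt_sym (crt_rcons j C2)).
apply: rt_step; exists v, [::], j, i; split; first by clear -Hij; lia.
by rewrite -!cats1 -!catA.
Qed.

Theorem proposition7p12 (n : nat) (s : 'S_n) :
  NCperm s ->
  (exists w, RedNC s w) /\
  (forall w0, RedNC s w0 ->
     forall w, RedNC s w <-> clos_refl_trans (seq nat) comm_move w0 w).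
Proof.
move=> Hs; split; first exact: exist_red (ltnSn _) Hs.
move=> w0 R0 w; split.
- by move=> R; apply: connect_red (ltnSn _) Hs _ _ R0 R.
- by move=> C; apply: crt_pres C R0.
Qed.
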